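(* For every $\Delta\ge 3$, the classes $\mathrm{coLP}[\mathsf{GRAPH}_\Delta]$ and $\mathrm{NLP}[\mathsf{GRAPH}_\Delta]$ are incomparable with respect to inclusion (neither contains the other); in particular $\mathrm{coLP}$ and $\mathrm{NLP}$ are incomparable.
   Context: Graphs. All graphs are finite, nonempty, simple, undirected and connected, and labeled: a graph is a triple $G=(V(G),E(G),\lambda_G)$ with labeling $\lambda_G:V(G)\to\{0,1\}^*$. $\mathsf{GRAPH}$ is the set of all graphs. A graph property is a subset of $\mathsf{GRAPH}$ closed under label-preserving isomorphism; its complement is $\overline P=\mathsf{GRAPH}\setminus P$. For a class $\mathcal C$ of properties and a set $B$ of graphs, $\mathcal C[B]=\{P\cap B : P\in\mathcal C\}$. $N^G_r(u)$ denotes the subgraph of $G$ induced by the nodes at distance at most $r$ from $u$ (with inherited labels). The structural degree of a node $u$ is $\deg(u)+|\lambda_G(u)|$; $\mathsf{GRAPH}_\Delta$ is the set of graphs all of whose nodes have structural degree at most $\Delta$. Identifiers and certificates. An identifier assignment of $G$ is a map $\mathrm{id}:V(G)\to\{0,1\}^*$; it is $r$-locally unique if $\mathrm{id}(u)\neq\mathrm{id}(v)$ for all distinct nodes $u,v$ at distance at most $2r$. Identifiers are ordered lexicographically (a proper prefix is smaller). A certificate assignment is a map $\kappa:V(G)\to\{0,1\}^*$; for $r\in\mathbb N$ and $p:\mathbb N\to\mathbb N$ it is $(r,p)$-bounded (w.r.t. $(G,\mathrm{id})$) if $|\kappa(u)|\le p\big(\sum_{v\in N^G_r(u)}(1+|\lambda_G(v)|+|\mathrm{id}(v)|)\big)$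 for every node $u$. Distributed Turing machines. Such a machine $M$ is a Turing machine with three one-way-infinite tapes (receiving, internal, sending) over the alphabet $\{\vdash,\square,\#,0,1\}$ (left-end marker, blank, separator, bits), with designated states start, pause, stop. It is executed on a graph $G$ under an (at least $1$-locally unique) identifier assignment $\mathrm{id}$ and a certificate assignment $\kappa$: every node runs its own copy of $M$ in synchronous rounds. In each round, a node $u$ whose neighbors are $v_1,\dots,v_d$ in increasing identifier order (i) gets $m_1\#\cdots\#m_d\#$ on its receiving tape, where $m_i$ is the message sent to it by $v_i$ in the previous round (empty in the first round); (ii) its sending tape is emptied, its internal tape is initialized to $\lambda_G(u)\#\mathrm{id}(u)\#\kappa(u)$ in the first round and otherwise keeps its content, and, unless $u$ reached stop in an earlier round, $M$ runs from state start with all heads leftmost until it enters pause or stop; (iii) $u$ sends to $v_i$ the $i$-th $\#$-separated bit string on its sending tape (the empty string if there is none). The execution terminates once all nodes are in stop. The result $M(G,\mathrm{id},\kappa)$ is $G$ relabeled so that each node gets the bit string on its internal tape (other symbols ignored); $G$ is accepted, written $M(G,\mathrm{id},\kappa)\equiv\mathrm{accept}$, if every node's resulting label is the string $1$. A local-polynomial machine is a distributed Turing machine for which there are a constant $c$ and a polynomial $q$ such that, on every graph and under all identifier and certificate assignments, all nodes reach stop within $c$ rounds, and in every round every node makes at most $q(n)$ computation steps, $n$ being the total length of its receiving- and internal-tape contents at the beginning of the round. Classes. $\mathrm{LP}$ is the class of graph properties $P$ for which there are a local-polynomial machine $M$ and a constant $r_{\mathrm{id}}\ge1$ such that for every graph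 $G$ and every $r_{\mathrm{id}}$-locally unique identifier assignment $\mathrm{id}$, $M$ accepts $G$ under $\mathrm{id}$ (with empty certificates) iff $G\in P$. $\mathrm{NLP}$ is the class of graph properties $P$ for which there exist a local-polynomial machine $M$, constants $r_{\mathrm{id}},r\ge 1$ and a polynomial $p$ such that for every graph $G$ and every $r_{\mathrm{id}}$-locally unique identifier assignment $\mathrm{id}$ of $G$: $G\in P\iff\exists\kappa\,:\,M(G,\mathrm{id},\kappa)\equiv\mathrm{accept}$, $\kappa$ ranging over $(r,p)$-bounded certificate assignments of $(G,\mathrm{id})$. $\mathrm{coLP}=\{\overline P:P\in\mathrm{LP}\}$. *)

(* Defs.v *)
From HB Require Import structures.
From mathcomp Require Import all_boot.
Set Implicit Arguments. Unset Strict Implicit. Unset Printing Implicit Defensive.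

Record graph := Graph {
  gV : finType;
  gadj : rel gV;
  glab : gV -> seq bool;
  gadj_irr : irreflexive gadj;
  gadj_sym : symmetric gadj;
  gV_nonempty : 0 < #|gV|;
  g_connected : forall u v : gV, connect gadj u v }.

Definition graph_iso (G H : graph) : Prop :=
  exists f : gV G -> gV H, bijective f /\
    (forall u v, @gadj H (f u) (f v) = @gadj G u v) /\
    (forall u, @glab H (f u) = @glab G u).

Definition is_property (P : graph -> Prop) : Prop :=
  forall G H, graph_iso G H -> P G -> P H.

Fixpoint dist_le (G : graph) (r : nat) (u v : gV G) : bool :=
  match r with
  | 0 => u == v
  | r'.+1 => dist_le r' u v || [exists w, dist_le r' u w && @gadj G w v]
  end.

Definition sdeg (G : graph) (u : gV G) : nat :=
  #|[pred v | @gadj G u v]| + size (@glab G u).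
Definition GRAPH_bdeg (D : nat) (G : graph) : Prop :=
  forall u : gV G, sdeg u <= D.

Definition loc_unique (G : graph) (r : nat) (id : gV G -> seq bool) : Prop :=
  forall u v, u != v -> dist_le (2 * r) u v -> id u != id v.

Fixpoint lexle (s t : seq bool) : bool :=
  match s, t with
  | [::], _ => true
  | _ :: _, [::] => false
  | a :: s', b :: t' => if a == b then lexle s' t' else (~~ a) && b
  end.

(* polynomials with natural coefficients c_0 + c_1 n + ... *)
Definition peval (q : seq nat) (n : nat) : nat :=
  foldr (fun c acc => c + n * acc) 0 q.

Definition cert_bounded (G : graph) (r : nat) (p : seq nat)
    (id kappa : gV G -> seq bool) : Prop :=
  forall u, size (kappa u) <=
    peval p (\sum_(v | dist_le r u v) (1 + size (@glab G v) + size (id v))).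

Inductive sym := Lm | Blank | Sep | B0 | B1.   (* |-, square, #, 0, 1 *)
Inductive dir := DL | DS | DR.

Definition enc (s : seq bool) : seq sym := map (fun b : bool => if b then B1 else B0) s.
Definition bits (s : seq sym) : seq bool :=
  pmap (fun x => match x with B0 => Some false | B1 => Some true | _ => None end) s.

Record dtm := DTM {
  dst : finType;
  q_start : dst; q_pause : dst; q_stop : dst;
  delta : dst -> sym -> sym -> sym -> dst * (sym * sym * sym) * (dir * dir * dir) }.

(* a tape: its cells (cell 0 holds the left-end marker; cells beyond the
   sequence are blank) and a head position *)
Record tape := Tape { tcells : seq sym; thead : nat }.
Definition tread (t : tape) : sym := nth Blank (tcells t) (thead t).
Definition twrite (t : tape) (x : sym) : tape :=
  if thead t == 0 then t else Tape (set_nth Blank (tcells t) (thead t) x) (thead t).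
Definition tmove (t : tape) (d : dir) : tape :=
  match d with
  | DL => Tape (tcells t) (thead t).-1
  | DS => t
  | DR => Tape (tcells t) (thead t).+1
  end.
Definition tact (t : tape) (x : sym) (d : dir) : tape := tmove (twrite t x) d.

Record config (M : dtm) := Cfg { cst : dst M; crecv : tape; cint : tape; csend : tape }.

Definition step (M : dtm) (c : config M) : config M :=
  let: (q', (w1, w2, w3), (d1, d2, d3)) :=
    delta (cst c) (tread (crecv c)) (tread (cint c)) (tread (csend c)) in
  Cfg q' (tact (crecv c) w1 d1) (tact (cint c) w2 d2) (tact (csend c) w3 d3).

Definition halted (M : dtm) (c : config M) : bool :=
  (cst c == q_pause M) || (cst c == q_stop M).

(* start configuration of a round: receiving tape content, internal
   tape content (both including the marker), empty sending tape *)
Definition cfg0 (M : dtm) (recv int : seq sym) : config M :=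
  Cfg (q_start M) (Tape recv 0) (Tape int 0) (Tape [:: Lm] 0).

Definition halts_at (M : dtm) (recv int : seq sym) (k : nat) : Prop :=
  halted (iter k (@step M) (cfg0 M recv int)) /\
  forall j, j < k -> ~~ halted (iter j (@step M) (cfg0 M recv int)).

Record nstate := NS { ns_int : seq sym; ns_send : seq sym; ns_stop : bool }.

Fixpoint segs (s : seq sym) : seq (seq sym) :=
  match s with
  | [::] => [:: [::]]
  | Sep :: s' => [::] :: segs s'
  | x :: s' => match segs s' with h :: t => (x :: h) :: t | [::] => [:: [:: x]] end
  end.

Section Exec.
Variables (M : dtm) (G : graph) (id kappa : gV G -> seq bool).

Definition nbrs (u : gV G) : seq (gV G) :=
  sort (fun v w => lexle (id v) (id w)) (enum [pred v | @gadj G u v]).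

(* message sent by v to u: the i-th #-separated bit string on v's
   sending tape, where u is the i-th neighbor of v *)
Definition msg (S : gV G -> nstate) (v u : gV G) : seq bool :=
  bits (nth [::] (segs (behead (ns_send (S v)))) (index u (nbrs v))).

Definition recv_content (S : gV G -> nstate) (u : gV G) : seq sym :=
  Lm :: flatten [seq enc (msg S v u) ++ [:: Sep] | v <- nbrs u].

Definition init_state (u : gV G) : nstate :=
  NS (Lm :: enc (@glab G u) ++ Sep :: enc (id u) ++ Sep :: enc (kappa u))
     [:: Lm] false.

Definition node_round (recv : seq sym) (s s' : nstate) : Prop :=
  if ns_stop s then s' = NS (ns_int s) [:: Lm] true
  else exists k, halts_at M recv (ns_int s) k /\
    let c := iter k (@step M) (cfg0 M recv (ns_int s)) in
    s' = NS (tcells (cint c)) (tcells (csend c)) (cst c == q_stop M).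

Fixpoint exec (t : nat) (S : gV G -> nstate) : Prop :=
  match t with
  | 0 => forall u, S u = init_state u
  | t'.+1 => exists S0, exec t' S0 /\
              forall u, node_round (recv_content S0 u) (S0 u) (S u)
  end.

Definition accepts : Prop :=
  exists t S, exec t S /\ forall u, ns_stop (S u) /\ bits (ns_int (S u)) = [:: true].

End Exec.

Definition content_len (s : seq sym) : nat := (size s).-1.

Definition local_poly (M : dtm) : Prop :=
  exists (c : nat) (q : seq nat), forall (G : graph) (id kappa : gV G -> seq bool),
    loc_unique 1 id ->
    (exists S, exec M id kappa c S /\ forall u, ns_stop (S u)) /\
    (forall t S, exec M id kappa t S -> forall u, ~~ ns_stop (S u) ->
       exists k, k <= peval q (content_len (recv_content id S u) + content_len (ns_int (S u)))
                 /\ halts_at M (recv_content id S u) (ns_int (S u)) k).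

Definition LP (P : graph -> Prop) : Prop :=
  is_property P /\
  exists (M : dtm) (rid : nat), local_poly M /\ 1 <= rid /\
    forall (G : graph) (id : gV G -> seq bool), loc_unique rid id ->
      (accepts M id (fun _ => [::]) <-> P G).

Definition NLP (P : graph -> Prop) : Prop :=
  is_property P /\
  exists (M : dtm) (rid r : nat) (p : seq nat), local_poly M /\ 1 <= rid /\ 1 <= r /\
    forall (G : graph) (id : gV G -> seq bool), loc_unique rid id ->
      (P G <-> exists kappa, cert_bounded r p id kappa /\ accepts M id kappa).

Definition coLP (P : graph -> Prop) : Prop :=
  exists P', LP P' /\ forall G, P G <-> ~ P' G.

(* C[B] = { P /\ B : P in C } (up to extensional equality) *)
Definition restrict (C : (graph -> Prop) -> Prop) (B : graph -> Prop)
    (Q : graph -> Prop) : Prop :=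
  exists P, C P /\ forall G, Q G <-> (P G /\ B G).

Definition class_incl (C D : (graph -> Prop) -> Prop) : Prop :=
  forall Q, C Q -> D Q.

(* Main.v *)
Require Import Defs.
From mathcomp Require Import all_boot zify.
From Stdlib Require Import Classical FunctionalExtensionality.
Set Implicit Arguments. Unset Strict Implicit. Unset Printing Implicit Defensive.

Lemma lexle_refl : reflexive lexle.
Proof. by elim=> [|a s IH] //=; rewrite eqxx. Qed.

Lemma lexle_total : total lexle.
Proof.
elim=> [|a s IH] [|b t] //=.
case: a; case: b => //=; exact: IH.
Qed.

Lemma lexle_trans : transitive lexle.
Proof.
move=> t s; elim: s t => [|a s IH] [|b t] [|c u] //=.
case: a; case: b; case: c => //= h1 h2; exact: IH h1 h2.
Qed.

Lemma lexle_anti : antisymmetric lexle.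
Proof.
elim=> [|a s IH] [|b t] //=.
case: a; case: b => //= /IH -> //.
Qed.

Section Loc.
Variables (G H : graph) (idG kG : gV G -> seq bool) (idH kH : gV H -> seq bool).

Definition dataeq (u : gV G) (v : gV H) : Prop :=
  glab u = glab v /\ idG u = idH v /\ kG u = kH v /\
  map idG (nbrs idG u) = map idH (nbrs idH v).

Fixpoint bis (t : nat) (u : gV G) (v : gV H) : Prop :=
  dataeq u v /\
  match t with 0 => True | s.+1 =>
    forall k, k < size (nbrs idG u) -> bis s (nth u (nbrs idG u) k) (nth v (nbrs idH v) k) end.

Lemma bis_data t u v : bis t u v -> dataeq u v.
Proof. by case: t => [|t] []. Qed.

Lemma bis_pred t u v : bis t.+1 u v -> bis t u v.
Proof.
elim: t u v => [|t IH] u v [d h] /=; first by [].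
split=> // k hk; apply: IH; exact: h.
Qed.

End Loc.

Lemma mem_nbrs (G : graph) (id : gV G -> seq bool) u v : (v \in nbrs id u) = gadj u v.
Proof. by rewrite /nbrs mem_sort mem_enum. Qed.

Lemma adj_dist1 (G : graph) (u v : gV G) : gadj u v -> dist_le 1 u v.
Proof. move=> h /=; apply/orP; right; apply/existsP; exists u; by rewrite eqxx h. Qed.

Lemma nbr_inj (G : graph) (id : gV G -> seq bool) w y u :
  loc_unique 1 id -> gadj w y -> gadj w u -> id y = id u -> y = u.
Proof.
move=> hl hy hu he; apply/eqP; apply/negPn/negP => hne.
suff hd : dist_le (2*1) y u by move: (hl _ _ hne hd); rewrite he eqxx.
rewrite /=.
apply/orP; right; apply/existsP; exists w; rewrite hu andbT.
apply/orP; right; apply/existsP; exists y; rewrite eqxx /=.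
by rewrite gadj_sym.
Qed.

Lemma index_inj (T1 T2 : eqType) (f : T1 -> T2) s x :
  (forall y, y \in s -> f y = f x -> y = x) -> index (f x) (map f s) = index x s.
Proof.
elim: s => [|y s IH] //= h.
case: (eqVneq y x) => [->|hne]; first by rewrite eqxx.
have -> : (f y == f x) = false.
  apply/negbTE/negP => /eqP e; by rewrite (h y (mem_head _ _) e) eqxx in hne.
rewrite IH // => z hz; apply: h; by rewrite inE hz orbT.
Qed.

Lemma halts_uniq M recv int k1 k2 :
  halts_at M recv int k1 -> halts_at M recv int k2 -> k1 = k2.
Proof.
move=> [h1 n1] [h2 n2]; case: (ltngtP k1 k2) => // hlt.
- by move: (n2 _ hlt); rewrite h1.
- by move: (n1 _ hlt); rewrite h2.
Qed.

Lemma round_det M recv s s1 s2 :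
  node_round M recv s s1 -> node_round M recv s s2 -> s1 = s2.
Proof.
rewrite /node_round; case: ifP => _; first by move=> -> ->.
move=> [k1 [h1 ->]] [k2 [h2 ->]]; by rewrite (halts_uniq h1 h2).
Qed.

Section Loc2.
Variables (M : dtm) (G H : graph) (idG kG : gV G -> seq bool) (idH kH : gV H -> seq bool).
Hypotheses (uG : loc_unique 1 idG) (uH : loc_unique 1 idH).

Lemma locality t SG SH : exec M idG kG t SG -> exec M idH kH t SH ->
  forall u v, bis idG kG idH kH t u v -> SG u = SH v.
Proof.
elim: t SG SH => [|t IH] SG SH /=.
  move=> hG hH u v [[l [i [k _]]] _]; by rewrite hG hH /init_state l i k.
move=> [SG0 [eG rG]] [SH0 [eH rH]] u v hb.
have hb0 := bis_pred hb.
have e0 := IH _ _ eG eH _ _ hb0.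
move: hb => [[l [i [k hm]]] hn].
have hsz : size (nbrs idG u) = size (nbrs idH v).
  by rewrite -(size_map idG) hm size_map.
have erecv : recv_content idG SG0 u = recv_content idH SH0 v.
  rewrite /recv_content; congr (_ :: _).
  congr (flatten _).
  apply: (@eq_from_nth _ [::]); first by rewrite !size_map.
  move=> n; rewrite size_map => hn'.
  rewrite (nth_map u) // (nth_map v) -?hsz //.
  set w := nth u _ n; set w' := nth v _ n.
  have hbw := hn _ hn'.
  have ew := IH _ _ eG eH _ _ hbw.
  move: (bis_data hbw) => [_ [_ [_ hmw]]].
  congr (enc _ ++ _).
  rewrite /msg ew; congr (bits (nth _ _ _)).
  have hwu : gadj w u.
    rewrite gadj_sym -(mem_nbrs idG); exact: mem_nth.
  have hwv : gadj w' v.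
    rewrite gadj_sym -(mem_nbrs idH); apply: mem_nth; by rewrite -hsz.
  rewrite -(@index_inj _ _ idG); last first.
    move=> y; rewrite mem_nbrs => hy; exact: nbr_inj uG hy hwu.
  rewrite -(@index_inj _ _ idH); last first.
    move=> y; rewrite mem_nbrs => hy; exact: nbr_inj uH hy hwv.
  by rewrite hmw i.
apply: round_det (rG u) _; by rewrite erecv e0.
Qed.

End Loc2.

Lemma bis_refl (G : graph) (id k : gV G -> seq bool) t u : bis id k id k t u u.
Proof. elim: t u => [|t IH] u /=; by split. Qed.

Section Exec2.
Variables (M : dtm) (G : graph) (id k : gV G -> seq bool).
Hypothesis uG : loc_unique 1 id.

Lemma exec_det t S1 S2 : exec M id k t S1 -> exec M id k t S2 -> forall u, S1 u = S2 u.
Proof. move=> h1 h2 u; apply: (locality uG uG h1 h2); exact: bis_refl. Qed.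

Lemma exec_ext t S : exec M id k t S -> (forall u, ns_stop (S u)) ->
  forall n, exists S', exec M id k (t + n) S' /\
     forall u, ns_stop (S' u) /\ ns_int (S' u) = ns_int (S u).
Proof.
move=> he hs; elim=> [|n [S' [he' hs']]].
  exists S; rewrite addn0; split => // u; by split.
exists (fun u => NS (ns_int (S' u)) [:: Lm] true); rewrite addnS /=; split.
  exists S'; split => // u; rewrite /node_round; by case: (hs' u) => -> _.
move=> u; split => //=; by case: (hs' u).
Qed.

Lemma final_eq t1 t2 S1 S2 : exec M id k t1 S1 -> (forall u, ns_stop (S1 u)) ->
  exec M id k t2 S2 -> (forall u, ns_stop (S2 u)) ->
  forall u, ns_int (S1 u) = ns_int (S2 u).
Proof.
wlog le12 : t1 t2 S1 S2 / t1 <= t2.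
  move=> W h1 s1 h2 s2 u; case: (leqP t1 t2) => hle; first exact: (W t1 t2).
  symmetry; apply: (W t2 t1) => //; exact: ltnW.
move=> h1 s1 h2 s2 u.
have [S' [he' hs']] := exec_ext h1 s1 (t2 - t1).
rewrite subnKC // in he'.
have -> := exec_det h2 he' u; by case: (hs' u).
Qed.

End Exec2.

Section Sim.
Variables (G H : graph) (idG kG : gV G -> seq bool) (idH kH : gV H -> seq bool).
Hypotheses (uG : loc_unique 1 idG) (uH : loc_unique 1 idH).
Variable R : nat -> gV G -> gV H -> Prop.
Hypothesis h1 : forall t u v, R t u v -> glab u = glab v /\ idG u = idH v /\ kG u = kH v.
Hypothesis h2 : forall t u v, R t u v -> forall u', gadj u u' ->
  exists v', gadj v v' /\ idG u' = idH v' /\ (0 < t -> R t.-1 u' v').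
Hypothesis h3 : forall t u v, R t u v -> forall v', gadj v v' ->
  exists u', gadj u u' /\ idG u' = idH v'.

Lemma nbrs_sortE (K : graph) (id : gV K -> seq bool) u :
  map id (nbrs id u) = sort lexle (map id (enum [pred v | gadj u v])).
Proof. by rewrite /nbrs sort_map. Qed.

Lemma sim_map t u v : R t u v -> map idG (nbrs idG u) = map idH (nbrs idH v).
Proof.
move=> hR; rewrite !nbrs_sortE; apply/perm_sortP.
- exact: lexle_total.
- exact: lexle_trans.
- exact: lexle_anti.
apply: uniq_perm.
- rewrite map_inj_in_uniq ?enum_uniq // => x y; rewrite !mem_enum !inE => hx hy.
  exact: nbr_inj uG hx hy.
- rewrite map_inj_in_uniq ?enum_uniq // => x y; rewrite !mem_enum !inE => hx hy.
  exact: nbr_inj uH hx hy.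
move=> x; apply/mapP/mapP => [[u' hu' ->]|[v' hv' ->]].
  move: hu'; rewrite mem_enum inE => hu'.
  have [v' [hv' [e _]]] := h2 hR hu'; exists v'; by rewrite ?mem_enum.
move: hv'; rewrite mem_enum inE => hv'.
have [u' [hu' e]] := h3 hR hv'; exists u'; by rewrite ?mem_enum.
Qed.

Lemma sim_bis t u v : R t u v -> bis idG kG idH kH t u v.
Proof.
elim: t u v => [|t IH] u v hR.
  have [l [i k]] := h1 hR; split => //; split => //; split => //; split => //.
  exact: sim_map hR.
have [l [i k]] := h1 hR; have hm := sim_map hR.
split; first by split => //; split => //; split.
move=> n hn.
have hu' : gadj u (nth u (nbrs idG u) n) by rewrite -(mem_nbrs idG) mem_nth.
have [v' [hv' [e hR']]] := h2 hR hu'.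
have hsz : size (nbrs idG u) = size (nbrs idH v) by rewrite -(size_map idG) hm size_map.
have hv'' : gadj v (nth v (nbrs idH v) n) by rewrite -(mem_nbrs idH) mem_nth // -hsz.
have -> : nth v (nbrs idH v) n = v'.
  apply: nbr_inj uH hv'' hv' _.
  rewrite -(nth_map _ (idH v)) -?hsz // -hm (nth_map u) //.
apply: IH; exact: hR'.
Qed.

End Sim.

Definition delta0 (q : bool * bool) (a b c : sym) :
    (bool * bool) * (sym * sym * sym) * (dir * dir * dir) :=
  match q with
  | (false, false) => ((false, true), (a, b, c), (DS, DR, DS))
  | (false, true) => if b is Sep then ((true, false), (a, B1, c), (DS, DR, DS))
                     else ((true, false), (a, Blank, c), (DS, DR, DS))
  | (true, false) => if b is Blank then ((true, true), (a, b, c), (DS, DS, DS))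
                     else ((true, false), (a, Blank, c), (DS, DR, DS))
  | (true, true) => ((true, true), (a, b, c), (DS, DS, DS))
  end.

Definition M0 : dtm := @DTM (bool * bool)%type (false, false) (true, true) (true, true) delta0.

Definition nonblank (x : sym) : bool := if x is Blank then false else true.

Section Run.
Variable R : seq sym.
Definition Cf (q : bool * bool) (cells : seq sym) (h : nat) : config M0 :=
  @Cfg M0 q (Tape R 0) (Tape cells h) (Tape [:: Lm] 0).

Lemma set_nth_mid (pre suf : seq sym) x y :
  set_nth Blank (pre ++ x :: suf) (size pre) y = pre ++ y :: suf.
Proof. elim: pre => [|a pre IH] //=; by rewrite IH. Qed.

Lemma set_nth_end (pre : seq sym) y :
  set_nth Blank pre (size pre) y = rcons pre y.
Proof. elim: pre => [|a pre IH] //=; by rewrite IH. Qed.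

Lemma bits_rcons_blank s : bits (rcons s Blank) = bits s.
Proof. by rewrite /bits -cats1 pmap_cat /= cats0. Qed.

Lemma erase_run suf : forall pre, 0 < size pre -> all nonblank suf ->
  (forall j, j <= size suf -> cst (iter j (@step M0) (Cf (true, false) (pre ++ suf) (size pre))) = (true, false)) /\
  exists cells h, iter (size suf).+1 (@step M0) (Cf (true, false) (pre ++ suf) (size pre))
     = Cf (true, true) cells h /\ bits cells = bits pre.
Proof.
elim: suf => [|x suf IH] pre hp.
  move=> _; split; first by case.
  have hn : tread (Tape pre (size pre)) = Blank by rewrite /tread nth_default.
  rewrite cats0 /step /Cf /= hn /= /tact /twrite /=.
  have -> : (size pre == 0) = false by case: (size pre) hp.
  exists (rcons pre Blank), (size pre); split; first by rewrite set_nth_end.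
  exact: bits_rcons_blank.
case/andP=> hx hall.
have e1 : @step M0 (Cf (true, false) (pre ++ x :: suf) (size pre)) =
          Cf (true, false) (rcons pre Blank ++ suf) (size (rcons pre Blank)).
  have hx' : tread (Tape (pre ++ x :: suf) (size pre)) = x by rewrite /tread nth_cat ltnn subnn.
  have hz : (size pre == 0) = false by case: (size pre) hp.
  rewrite /step /Cf /= hx'.
  case: x hx hx' => //= _ _; rewrite /tact /twrite /= hz;
  by rewrite set_nth_mid cat_rcons size_rcons.
have hp' : 0 < size (rcons pre Blank) by rewrite size_rcons.
have [IHa [cells [h [IHb IHc]]]] := IH _ hp' hall.
split.
  case=> [|j] hj //.
  rewrite iterSr e1; apply: IHa; by [].
exists cells, h; split; first by rewrite iterSr e1.
by rewrite IHc bits_rcons_blank.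
Qed.
End Run.

Lemma run_gen R x rest : nonblank x -> all nonblank rest ->
  halts_at M0 R (Lm :: x :: rest) (size rest).+3 /\
  cst (iter (size rest).+3 (@step M0) (cfg0 M0 R (Lm :: x :: rest))) = (true, true) /\
  bits (tcells (cint (iter (size rest).+3 (@step M0) (cfg0 M0 R (Lm :: x :: rest)))))
    = (if x is Sep then [:: true] else [::]).
Proof.
move=> hx hr.
pose y := if x is Sep then B1 else Blank.
have e2 : iter 2 (@step M0) (cfg0 M0 R (Lm :: x :: rest)) = Cf R (true, false) ([:: Lm; y] ++ rest) 2.
  rewrite /= /step /cfg0 /Cf /=.
  rewrite /y; by case: x hx {y} => //= _.
have [ha [cells [h [hb hc]]]] := erase_run R (pre := [:: Lm; y]) (erefl _) hr.
have ek : iter (size rest).+3 (@step M0) (cfg0 M0 R (Lm :: x :: rest)) = Cf R (true, true) cells h.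
  by rewrite -addn2 iterD e2.
rewrite ek; split; last first.
  split => //; rewrite /= hc /y; by case: x {ha hb hc e2 ek y} hx.
split; first by rewrite /halted ek.
move=> j hj; rewrite /halted.
case: j hj => [|[|j]] hj //.
rewrite -addn2 iterD e2 ha //.
Qed.

Lemma run_body R body : 0 < size body -> all nonblank body ->
  halts_at M0 R (Lm :: body) (size body).+2 /\
  cst (iter (size body).+2 (@step M0) (cfg0 M0 R (Lm :: body))) = (true, true) /\
  bits (tcells (cint (iter (size body).+2 (@step M0) (cfg0 M0 R (Lm :: body)))))
    = (if head Blank body is Sep then [:: true] else [::]).
Proof.
case: body => [|x rest] //= _ /andP [hx hr]; exact: run_gen.
Qed.

Definition body (G : graph) (id k : gV G -> seq bool) (u : gV G) : seq sym :=
  enc (glab u) ++ Sep :: enc (id u) ++ Sep :: enc (k u).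

Lemma all_enc s : all nonblank (enc s).
Proof. by elim: s => [|[] s IH]. Qed.

Lemma body_ok (G : graph) (id k : gV G -> seq bool) u :
  0 < size (body id k u) /\ all nonblank (body id k u) /\
  ((if head Blank (body id k u) is Sep then [:: true] else [::]) = [:: true] <-> glab u = [::]).
Proof.
rewrite /body; split; first by rewrite size_cat /= addnS.
split; first by rewrite all_cat /= all_cat /= !all_enc.
by case: (glab u) => [|[] l].
Qed.

Definition S1 (G : graph) (id k : gV G -> seq bool) (u : gV G) : nstate :=
  let c := iter (size (body id k u)).+2 (@step M0)
             (cfg0 M0 (recv_content id (init_state id k) u) (Lm :: body id k u)) in
  NS (tcells (cint c)) (tcells (csend c)) true.

Lemma exec1 (G : graph) (id k : gV G -> seq bool) :
  exec M0 id k 1 (S1 id k) /\ forall u, ns_stop (S1 id k u).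
Proof.
split => //=; exists (init_state id k); split => // u.
rewrite /node_round /=.
have [h1 [h2 h3]] := body_ok id k u.
have [ha [hb hc]] := run_body (recv_content id (init_state id k) u) h1 h2.
exists (size (body id k u)).+2; split => //.
by rewrite /S1 hb.
Qed.

Lemma M0_lp : local_poly M0.
Proof.
exists 1, [:: 2; 1] => G id k _; split.
  exists (S1 id k); exact: exec1.
case=> [|t] S /=.
  move=> hS u _.
  have [h1 [h2 h3]] := body_ok id k u.
  have [ha _] := run_body (recv_content id S u) h1 h2.
  exists (size (body id k u)).+2; split; last by rewrite hS; exact: ha.
  rewrite /content_len /= muln0 addn0 muln1 hS.
  rewrite /init_state /=; fold (body id k u); lia.
move=> [S0 [_ hr]] u; move: (hr u); rewrite /node_round.
case: ifP => _; first by move=> ->.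
move=> [k0 [[hh _] ->]] /=; move: hh; rewrite /halted /= orbb => ->.
by [].
Qed.

Lemma M0_acc (G : graph) (id k : gV G -> seq bool) : loc_unique 1 id ->
  (accepts M0 id k <-> forall u : gV G, glab u = [::]).
Proof.
move=> hu; have [e1 s1] := exec1 id k.
have out : forall u : gV G, bits (ns_int (S1 id k u)) = [:: true] <-> glab u = [::].
  move=> u; have [h1 [h2 h3]] := body_ok id k u.
  have [_ [_ hc]] := run_body (recv_content id (init_state id k) u) h1 h2.
  by rewrite /S1 /= hc.
split.
  move=> [t [S [he hs]]] u; apply/out.
  rewrite (final_eq hu e1 s1 he (fun u => proj1 (hs u))); exact: proj2 (hs u).
move=> h; exists 1, (S1 id k); split => // u; split => //; exact/out.
Qed.

Lemma modS_lin n x : x < n ->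
  (x.+1 < n /\ x.+1 %% n = x.+1) \/ (x.+1 = n /\ x.+1 %% n = 0).
Proof.
move=> hx; case: (ltnP x.+1 n) => h; first by left; rewrite modn_small.
right; have e : x.+1 = n by lia.
by rewrite e modnn.
Qed.

Definition code (K x : nat) : seq bool := nseq x true ++ nseq (K - x) false.

Lemma code_inj K x y : code K x = code K y -> x = y.
Proof.
move/(congr1 (count id)); rewrite /code !count_cat !count_nseq /=; lia.
Qed.

Lemma size_code K x : x <= K -> size (code K x) = K.
Proof. move=> h; rewrite /code size_cat !size_nseq; lia. Qed.

Section Cyc.
Variable m : nat.
Hypothesis hm : 1 < m.

Definition cadj : rel 'I_m.+1 :=
  fun u v => (nat_of_ord v == (nat_of_ord u).+1 %% m.+1) || (nat_of_ord u == (nat_of_ord v).+1 %% m.+1).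

Lemma cadjP (u v : 'I_m.+1) : cadj u v <->
  (nat_of_ord v = (nat_of_ord u).+1 \/ ((nat_of_ord u).+1 = m.+1 /\ nat_of_ord v = 0) \/
   nat_of_ord u = (nat_of_ord v).+1 \/ ((nat_of_ord v).+1 = m.+1 /\ nat_of_ord u = 0)).
Proof.
rewrite /cadj.
have [[h1 e1]|[h1 e1]] := modS_lin (ltn_ord u);
have [[h2 e2]|[h2 e2]] := modS_lin (ltn_ord v); rewrite e1 e2.
all: split; [move=> /orP [/eqP h|/eqP h]; lia|].
all: move=> h; apply/orP; case: h => [h|[h|[h|h]]]; first [left; apply/eqP; lia | right; apply/eqP; lia].
Qed.

Lemma cadj_irr : irreflexive cadj.
Proof. move=> u; apply/negP => /cadjP h; lia. Qed.

Lemma cadj_sym : symmetric cadj.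
Proof. move=> u v; by rewrite /cadj orbC. Qed.

Lemma cyc_nonempty : 0 < #|'I_m.+1|.
Proof. by rewrite card_ord. Qed.

Lemma cyc_conn0 : forall k (hk : k < m.+1), connect cadj ord0 (Ordinal hk).
Proof.
elim=> [|k IH] hk.
  by have -> : Ordinal hk = ord0 by apply: val_inj.
have hk' : k < m.+1 by lia.
apply: connect_trans (IH hk') _; apply: connect1; apply/cadjP; left => /=; lia.
Qed.

Lemma cyc_conn (u v : 'I_m.+1) : connect cadj u v.
Proof.
apply: (@connect_trans _ _ ord0).
  rewrite (sym_connect_sym cadj_sym); case: u => k hk; exact: cyc_conn0.
case: v => k hk; exact: cyc_conn0.
Qed.

Definition cyc (lab : 'I_m.+1 -> seq bool) : graph :=
  @Graph _ cadj lab cadj_irr cadj_sym cyc_nonempty cyc_conn.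

Definition sucn (u : 'I_m.+1) : 'I_m.+1 := inord (if nat_of_ord u == m then 0 else (nat_of_ord u).+1).
Definition pren (u : 'I_m.+1) : 'I_m.+1 := inord (if nat_of_ord u == 0 then m else (nat_of_ord u).-1).

Lemma sucnE u : nat_of_ord (sucn u) = if nat_of_ord u == m then 0 else (nat_of_ord u).+1.
Proof. rewrite /sucn inordK //; case: ifP => /eqP; have := ltn_ord u; lia. Qed.

Lemma prenE u : nat_of_ord (pren u) = if nat_of_ord u == 0 then m else (nat_of_ord u).-1.
Proof. rewrite /pren inordK //; case: ifP => /eqP; have := ltn_ord u; lia. Qed.

Lemma cadj_sucn u : cadj u (sucn u).
Proof. apply/cadjP; rewrite sucnE; case: ifP => /eqP; have := ltn_ord u; lia. Qed.

Lemma cadj_pren u : cadj u (pren u).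
Proof. apply/cadjP; rewrite prenE; case: ifP => /eqP; have := ltn_ord u; lia. Qed.

Lemma cadj_cases u v : cadj u v -> v = sucn u \/ v = pren u.
Proof.
move/cadjP => h.
have hu := ltn_ord u; have hv := ltn_ord v.
have es := sucnE u; have ep := prenE u.
suff : nat_of_ord v = sucn u \/ nat_of_ord v = pren u.
  by case=> e; [left|right]; apply: val_inj.
move: es ep; do 2 case: ifP => /eqP ?; lia.
Qed.

Lemma cyc_deg (u : 'I_m.+1) : #|[pred v | cadj u v]| <= 2.
Proof.
apply: leq_trans (_ : #|[set sucn u; pren u]| <= 2); last by rewrite cards2; case: (_ != _).
apply: subset_leq_card; apply/subsetP => v; rewrite inE => /cadj_cases [->|->];
by rewrite !inE eqxx ?orbT.
Qed.

Definition cong (a b d : nat) := a = b + d \/ a + m.+1 = b + d.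

Section Dist.
Variable lab : 'I_m.+1 -> seq bool.

Lemma dist_cyc r (u v : 'I_m.+1) : r < m -> @dist_le (cyc lab) r u v ->
  exists d, d <= r /\ (cong v u d \/ cong u v d).
Proof.
rewrite /cong.
elim: r v => [|r IH] v hr /=.
  move/eqP => ->; exists 0; lia.
have {}IH := fun v => IH v (ltnW hr).
case/orP => [/IH [d [hd h]]|/existsP [w /andP [/IH [d [hd h]] /cadjP ha]]].
  exists d; split => //; lia.
have hu := ltn_ord u; have hv := ltn_ord v; have hw := ltn_ord w.
case: h => [[h|h]|[h|h]]; case: ha => [ha|[ha|[ha|ha]]];
  first [exists d.+1; lia | exists d.-1; lia | exists 1; lia | exists 0; lia
        | (destruct d; [exists 1; lia | exists d; lia])].
Qed.

Lemma dist_mono a b (u v : 'I_m.+1) : @dist_le (cyc lab) a u v -> a <= b -> @dist_le (cyc lab) b u v.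
Proof.
move=> h /subnKC <-; elim: (b - a) => [|k IH]; first by rewrite addn0.
by rewrite addnS /= IH.
Qed.

Lemma cong_dist_f d (u w : 'I_m.+1) : cong w u d -> @dist_le (cyc lab) d u w.
Proof.
rewrite /cong; elim: d w => [|d IH] w h /=.
  have := ltn_ord u; have := ltn_ord w => hw hu.
  apply/eqP; apply: val_inj => /=; lia.
apply/orP; right; apply/existsP; exists (pren w); apply/andP; split.
  apply: IH; have := prenE w; have := ltn_ord u; have := ltn_ord w => hw hu.
  case: ifP => /eqP ? ->; lia.
apply/cadjP; have := prenE w; have := ltn_ord w => hw.
case: ifP => /eqP ? ->; lia.
Qed.

Lemma cong_dist_b d (u w : 'I_m.+1) : cong u w d -> @dist_le (cyc lab) d u w.
Proof.
rewrite /cong; elim: d w => [|d IH] w h /=.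
  have := ltn_ord u; have := ltn_ord w => hw hu.
  apply/eqP; apply: val_inj => /=; lia.
apply/orP; right; apply/existsP; exists (sucn w); apply/andP; split.
  apply: IH; have := sucnE w; have := ltn_ord u; have := ltn_ord w => hw hu.
  case: ifP => /eqP ? ->; lia.
apply/cadjP; have := sucnE w; have := ltn_ord w => hw.
case: ifP => /eqP ? ->; lia.
Qed.

Lemma cong_mod K a b d : K %| m.+1 -> d < K -> (a = b + d \/ a + m.+1 = b + d) ->
  a %% K = b %% K -> d = 0.
Proof.
move=> hK hd h e.
have e2 : (b + d) %% K = (b + 0) %% K.
  case: h => <-; first by rewrite addn0.
  rewrite addn0 -modnDmr (eqP hK) addn0 //.
move/eqP: e2; rewrite eqn_modDl mod0n modn_small //; by move/eqP.
Qed.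

Definition fnode (u : 'I_m.+1) d : 'I_m.+1 := inord (if u + d < m.+1 then u + d else u + d - m.+1).
Definition bnode (u : 'I_m.+1) d : 'I_m.+1 := inord (if d <= u then u - d else u + m.+1 - d).

Lemma fnodeE u d : d <= m.+1 -> nat_of_ord (fnode u d) = if u + d < m.+1 then u + d else u + d - m.+1.
Proof. move=> hd; rewrite /fnode inordK //; have := ltn_ord u; case: ifP; lia. Qed.

Lemma bnodeE u d : d <= m.+1 -> nat_of_ord (bnode u d) = if d <= u then u - d else u + m.+1 - d.
Proof. move=> hd; rewrite /bnode inordK //; have := ltn_ord u; case: ifP; lia. Qed.

Lemma ball_le r (u : 'I_m.+1) : r < m ->
  #|[set v | @dist_le (cyc lab) r u v]| <= r.*2.+1.
Proof.
move=> hr.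
apply: leq_trans (_ : #|[set fnode u (val d) | d : 'I_r.+1] :|: [set bnode u (val d).+1 | d : 'I_r]| <= _).
  apply: subset_leq_card; apply/subsetP => v; rewrite inE => /(dist_cyc hr) [d [hd h]].
  have hu := ltn_ord u; have hv := ltn_ord v.
  rewrite /cong in h.
  case: h => h.
    apply/setUP; left; apply/imsetP; exists (@Ordinal r.+1 d hd) => //.
    apply: val_inj; rewrite /= fnodeE; last lia; case: ifP; lia.
  case: d hd h => [|d] hd h.
    apply/setUP; left; apply/imsetP; exists (@Ordinal r.+1 0 (ltn0Sn _)) => //.
    apply: val_inj; rewrite /= fnodeE; last lia; case: ifP; lia.
  apply/setUP; right; apply/imsetP; exists (@Ordinal r d hd) => //.
  apply: val_inj; rewrite /= bnodeE; last lia; case: ifP; lia.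
apply: leq_trans (leq_card_setU _ _) _.
rewrite -addnn -addSn; apply: leq_add.
  by apply: leq_trans (leq_imset_card _ _) _; rewrite card_ord.
by apply: leq_trans (leq_imset_card _ _) _; rewrite card_ord.
Qed.

Definition onode (u : 'I_m.+1) r (e : nat) : 'I_m.+1 :=
  if e < r then bnode u (r - e) else fnode u (e - r).

Lemma ball_ge r (u : 'I_m.+1) : r.*2 < m.+1 ->
  r.*2.+1 <= #|[set v | @dist_le (cyc lab) r u v]|.
Proof.
move=> hr.
have inj : injective (fun e : 'I_r.*2.+1 => onode u r e).
  move=> e1 e2; rewrite /onode => h; apply: val_inj => /=.
  have hu := ltn_ord u; have h1 := ltn_ord e1; have h2 := ltn_ord e2.
  move: (congr1 (@nat_of_ord _) h).
  case: ifP => c1; case: ifP => c2; rewrite ?fnodeE ?bnodeE; try lia;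
  do 2 case: ifP; lia.
rewrite -[X in X <= _](card_ord r.*2.+1) -(card_imset _ inj).
apply: subset_leq_card; apply/subsetP => v /imsetP [e _ ->]; rewrite inE.
have he := ltn_ord e; have hu := ltn_ord u.
rewrite /onode; case: ifP => c.
  apply: (@dist_mono (r - e)); last lia.
  apply: cong_dist_b; rewrite /cong bnodeE; last lia; case: ifP; lia.
apply: (@dist_mono (e - r)); last lia.
apply: cong_dist_f; rewrite /cong fnodeE; last lia; case: ifP; lia.
Qed.

Lemma cyc_unique rid K : K = (2 * rid).+1 -> K %| m.+1 -> 2 * rid < m ->
  @loc_unique (cyc lab) rid (fun z => code K (z %% K)).
Proof.
move=> hK hdv hr u v hne /(dist_cyc hr) [d [hd h]].
apply/negP => /eqP /code_inj e.
have hu := ltn_ord u; have hv := ltn_ord v.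
have hdK : d < K by lia.
suff : nat_of_ord u = v by move=> /val_inj ee; by rewrite ee eqxx in hne.
case: h => h.
  have d0 := cong_mod hdv hdK h (esym e); rewrite /cong d0 in h; lia.
have d0 := cong_mod hdv hdK h e; rewrite /cong d0 in h; lia.
Qed.

End Dist.

End Cyc.

Lemma modD_dvd K a x : K %| x -> (a + x) %% K = a %% K.
Proof. move=> h; by rewrite -modnDmr (eqP h) addn0. Qed.

Section Pump.
Variables (m m' K c i j : nat) (hm : 1 < m) (hm' : 1 < m').
Variable kC : 'I_m.+1 -> seq bool.
Hypotheses (hL : m'.+1 = j - i) (hi : c.+2 <= i) (hij : i < j) (hjn : j + c.+2 <= m)
  (hKi : K %| i) (hKL : K %| m'.+1) (hLc : c.+2 < m'.+1).
Definition kn (x : nat) : seq bool := kC (inord x).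
Hypothesis win : forall e, e < c.*2.+2 -> kn (i - c.+1 + e) = kn (j - c.+1 + e).

Definition labC (z : 'I_m.+1) : seq bool := if nat_of_ord z == 0 then [:: true] else [::].
Definition idC (z : 'I_m.+1) : seq bool := code K (z %% K).
Definition idC' (y : 'I_m'.+1) : seq bool := code K (y %% K).
Definition kC' (y : 'I_m'.+1) : seq bool := kn (i + y).
Definition GC : graph := cyc hm labC.
Definition GC' : graph := cyc hm' (fun _ => [::]).

Definition rl (y : 'I_m'.+1) (z : 'I_m.+1) : Prop :=
  (i <= z /\ z < j /\ y + i = z) \/ (j <= z /\ y + j = z) \/ (z < i /\ y + i = z + m'.+1).

Lemma hKj : K %| j.
Proof. have -> : j = i + m'.+1 by lia. by rewrite dvdn_add. Qed.

Lemma dataD (y : 'I_m'.+1) (z : 'I_m.+1) : i <= z + c.+1 -> z < j + c.+1 -> rl y z ->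
  [::] = labC z /\ idC' y = idC z /\ kC' y = kC z.
Proof.
move=> h1 h2 hr; have hy := ltn_ord y.
split; first by rewrite /labC ifN //; apply/eqP; lia.
split.
  rewrite /idC' /idC; congr (code K _).
  case: hr => [[_ [_ <-]]|[[_ <-]|[_ e]]]; first by rewrite modD_dvd.
    by rewrite modD_dvd // hKj.
  by rewrite -(modD_dvd _ hKi) e modD_dvd.
have -> : kC z = kn z by rewrite /kn inord_val.
rewrite /kC'.
case: hr => [[_ [_ <-]]|[[_ e]|[h3 e]]]; first by rewrite addnC.
  have he : c.+1 + y < c.*2.+2 by lia.
  have := win he.
  have -> : i - c.+1 + (c.+1 + y) = i + y by lia.
  by have -> : j - c.+1 + (c.+1 + y) = z by lia.
have he : z - (i - c.+1) < c.*2.+2 by lia.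
have := win he.
have -> : i - c.+1 + (z - (i - c.+1)) = z by lia.
by have -> : j - c.+1 + (z - (i - c.+1)) = i + y by lia.
Qed.

Definition R (t : nat) (y : 'I_m'.+1) (z : 'I_m.+1) : Prop :=
  t <= c /\ i <= z + (c - t) /\ z < j + (c - t) /\ rl y z.

Lemma relS t y z : R t y z -> rl (sucn y) (inord z.+1 : 'I_m.+1).
Proof.
move=> [h1 [h2 [h3 hr]]]; rewrite /rl inordK; last lia.
have hy := ltn_ord y; rewrite (sucnE hm').
case: hr => [[a1 [a2 a3]]|[[a1 a2]|[a1 a2]]]; case: ifP => /eqP a4.
all: first [left; lia | right; left; lia | right; right; lia].
Qed.

Lemma relP t y z : R t y z -> rl (pren y) (inord z.-1 : 'I_m.+1).
Proof.
move=> [h1 [h2 [h3 hr]]]; rewrite /rl inordK; last by have := ltn_ord z; lia.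
have hy := ltn_ord y; rewrite (prenE hm').
case: hr => [[a1 [a2 a3]]|[[a1 a2]|[a1 a2]]]; case: ifP => /eqP a4.
all: first [left; lia | right; left; lia | right; right; lia].
Qed.

Hypotheses (uC : @loc_unique GC 1 idC) (uC' : @loc_unique GC' 1 idC').

Lemma sucn_val (z : 'I_m.+1) : z < m -> sucn z = inord z.+1.
Proof. move=> h; apply: val_inj; rewrite /= (sucnE hm) inordK ?ifN //; apply/eqP; lia. Qed.

Lemma pren_val (z : 'I_m.+1) : 0 < z -> pren z = inord z.-1.
Proof. move=> h; apply: val_inj; rewrite /= (prenE hm) inordK ?ifN //; have := ltn_ord z; lia. Qed.

Lemma simR t y z : R t y z -> @bis GC' GC idC' kC' idC kC t y z.
Proof.
apply: (@sim_bis GC' GC idC' kC' idC kC uC' uC R).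
- move=> t0 u v hR; have [a1 [a2 [a3 a4]]] := hR.
  have [b1 [b2 b3]] := dataD (y := u) (z := v) ltac:(lia) ltac:(lia) a4; by split.
- move=> t0 u v hR u' /(cadj_cases hm') [->|->].
    have hr := relS hR; have [a1 [a2 [a3 a4]]] := hR.
    exists (inord v.+1); split.
      apply/(cadjP hm); left; rewrite inordK //; lia.
    split; first by have [_ [-> _]] := dataD (y := sucn u) (z := inord v.+1)
      ltac:(rewrite inordK; lia) ltac:(rewrite inordK; lia) hr.
    move=> ht; rewrite /R inordK; last lia; split; first lia. split; first lia. split; first lia.
    by have := hr; rewrite /rl inordK //; lia.
  have hr := relP hR; have [a1 [a2 [a3 a4]]] := hR.
  exists (inord v.-1); split.
    apply/(cadjP hm); right; right; left; rewrite inordK //; have := ltn_ord v; lia.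
  have hv := ltn_ord v.
  split; first by have [_ [-> _]] := dataD (y := pren u) (z := inord v.-1)
      ltac:(rewrite inordK; lia) ltac:(rewrite inordK; lia) hr.
  move=> ht; rewrite /R inordK; last by have := ltn_ord v; lia.
  split; first lia. split; first lia. split; first lia.
  by have := hr; rewrite /rl inordK //; have := ltn_ord v; lia.
- move=> t0 u v hR v' /(cadj_cases hm) [->|->].
    have hr := relS hR; have [a1 [a2 [a3 a4]]] := hR.
    exists (sucn u); split; first exact: cadj_sucn.
    rewrite sucn_val; last lia.
    by have [_ [-> _]] := dataD (y := sucn u) (z := inord v.+1)
      ltac:(rewrite inordK; lia) ltac:(rewrite inordK; lia) hr.
  have hr := relP hR; have [a1 [a2 [a3 a4]]] := hR.
  exists (pren u); split; first exact: cadj_pren.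
  rewrite pren_val; last lia.
  have hv := ltn_ord v.
  by have [_ [-> _]] := dataD (y := pren u) (z := inord v.-1)
      ltac:(rewrite inordK; lia) ltac:(rewrite inordK; lia) hr.
Qed.

Lemma bis_main (y : 'I_m'.+1) : @bis GC' GC idC' kC' idC kC c y (inord (i + y)).
Proof.
have hy := ltn_ord y.
apply: simR; rewrite /R /rl inordK; last lia.
rewrite subnn !addn0; split => //; split; first lia; split; first lia.
left; lia.
Qed.

End Pump.

Section Sums.
Variables (m K r : nat) (hm : 1 < m) (lab : 'I_m.+1 -> seq bool).
Definition wsum (z : 'I_m.+1) : nat :=
  \sum_(v | @dist_le (cyc hm lab) r z v) (1 + size (lab v) + size (code K (v %% K))).

Lemma wsum_ge z : r.*2 < m.+1 -> (forall v, lab v = [::]) -> 0 < K ->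
  r.*2.+1 * K.+1 <= wsum z.
Proof.
move=> hr hl hK; rewrite /wsum.
rewrite (eq_bigr (fun _ => K.+1)); last first.
  move=> v _; rewrite hl size_code; [rewrite /=; lia| apply/ltnW/ltn_pmod/hK].
rewrite sum_nat_cond_const leq_mul2r; apply/orP; right; exact: ball_ge.
Qed.

Lemma wsum_le z : r < m -> 0 < K ->
  (forall v, @dist_le (cyc hm lab) r z v -> lab v = [::]) ->
  wsum z <= r.*2.+1 * K.+1.
Proof.
move=> hr hK hl; rewrite /wsum.
rewrite (eq_bigr (fun _ => K.+1)); last first.
  move=> v hv; rewrite hl // size_code; [rewrite /=; lia| apply/ltnW/ltn_pmod/hK].
rewrite sum_nat_cond_const leq_mul2r; apply/orP; right; exact: ball_le.
Qed.

Lemma wsum_gen z : r < m -> 0 < K -> (forall v, size (lab v) <= 1) ->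
  wsum z <= r.*2.+1 * K.+2.
Proof.
move=> hr hK hl; rewrite /wsum.
apply: leq_trans (_ : \sum_(v | @dist_le (cyc hm lab) r z v) K.+2 <= _).
  apply: leq_sum => v _; rewrite size_code; last by apply/ltnW/ltn_pmod/hK.
  have := hl v; lia.
rewrite sum_nat_cond_const leq_mul2r; apply/orP; right; exact: ball_le.
Qed.

End Sums.

Lemma dist_le_mono (G : graph) a b (u v : gV G) : a <= b -> dist_le a u v -> dist_le b u v.
Proof.
move=> /subnKC <- h; elim: (b - a) => [|k IH]; first by rewrite addn0.
by rewrite addnS /= IH.
Qed.

Lemma loc_unique_mono (G : graph) a b (id : gV G -> seq bool) :
  loc_unique a id -> b <= a -> loc_unique b id.
Proof.
move=> h hb u v hne hd; apply: h hne _; apply: dist_le_mono hd; lia.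
Qed.

Lemma peval_mono p a b : a <= b -> peval p a <= peval p b.
Proof.
move=> h; elim: p => [|x p IH] //=; rewrite leq_add2l; exact: leq_mul.
Qed.

Definition encb (b : nat) (s : seq bool) : 'I_b.+1 * {ffun 'I_b -> bool} :=
  (inord (size s), [ffun t : 'I_b => nth false s t]).

Lemma encb_inj b s1 s2 : size s1 <= b -> size s2 <= b -> encb b s1 = encb b s2 -> s1 = s2.
Proof.
move=> h1 h2 [e1 e2].
have es : size s1 = size s2.
  by move: (congr1 (@nat_of_ord _) e1); rewrite !inordK.
apply: (eq_from_nth (x0 := false) es) => k hk.
have hkb : k < b by lia.
by move: (congr1 (fun g : {ffun 'I_b -> bool} => g (Ordinal hkb)) e2); rewrite !ffunE.
Qed.

Lemma cyc_bdeg m (hm : 1 < m) (lab : 'I_m.+1 -> seq bool) :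
  (forall v, size (lab v) <= 1) -> GRAPH_bdeg 3 (cyc hm lab).
Proof.
move=> hl u; rewrite /sdeg; have := cyc_deg hm u; have := hl u; simpl; lia.
Qed.

Lemma fooling (M : dtm) rid r p (X : graph -> Prop) : local_poly M -> 1 <= rid ->
  (forall (G : graph) (id : gV G -> seq bool), loc_unique rid id ->
     (X G <-> exists kappa, cert_bounded r p id kappa /\ accepts M id kappa)) ->
  (forall G, GRAPH_bdeg 3 G -> (X G <-> exists u : gV G, glab u != [::])) -> False.
Proof.
move=> [c [q hlp]] hrid hX hB.
pose K := (2 * rid).+1.
pose T := c + r + 3.
pose S := T * K.
pose b := peval p (r.*2.+1 * K.+2).
pose W := {ffun 'I_(c.*2.+2) -> 'I_b.+1 * {ffun 'I_b -> bool}}.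
pose N := #|{: W}|.
pose m := S * (N + 3) - 1.
have hK3 : 3 <= K by rewrite /K; lia.
have hT : c + r + 3 <= T by [].
have hST : T * 3 <= S by rewrite /S leq_mul2l; apply/orP; right.
have hmS : m.+1 = S * (N + 3) by rewrite /m; nia.
have hm : 1 < m by nia.
have hKS : K %| S by rewrite /S dvdn_mull.
pose G := GC hm.
have hU : @loc_unique G rid (idC K).
  apply: (cyc_unique (K := K)) => //; last by nia.
  by rewrite hmS dvdn_mulr.
have hU1 : @loc_unique G 1 (idC K) by apply: loc_unique_mono hU _.
have hbd : GRAPH_bdeg 3 G by apply: cyc_bdeg => v; rewrite /labC; case: ifP.
have hXG : X G.
  apply/(hB _ hbd); by exists ord0.
have [kap [hcb hacc]] := (hX G (idC K) hU).1 hXG.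
have hrm : r < m by nia.
have kb : forall z, size (kap z) <= b.
  move=> z; apply: leq_trans (hcb z) _; apply: peval_mono.
  have hl : forall v : 'I_m.+1, size (labC v) <= 1 by move=> v; rewrite /labC; case: ifP.
  exact: (@wsum_gen m K r hm (@labC m) z hrm (ltn0Sn _) hl).
pose f := fun a : 'I_N.+1 =>
  [ffun e : 'I_(c.*2.+2) => encb b (kn kap (S * a.+1 - c.+1 + e))] : W.
have : ~~ injectiveb f.
  apply/injectiveP => hinj; have := @leq_card _ _ f hinj; rewrite card_ord => hh.
  have : N.+1 <= N := hh. by rewrite ltnn.
move/injectivePn => [a1 [a2 hne hf]].
have [lo [hi [hlo hfe]]] : exists lo hi : 'I_N.+1, lo < hi /\ f lo = f hi.
  case: (ltngtP a1 a2) => h.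
  - by exists a1, a2.
  - by exists a2, a1.
  - by move: hne; rewrite (val_inj h) eqxx.
pose i := S * lo.+1.
pose j := S * hi.+1.
have hhi := ltn_ord hi.
have win : forall e, e < c.*2.+2 -> kn kap (i - c.+1 + e) = kn kap (j - c.+1 + e).
  move=> e he.
  move: (congr1 (fun g : W => g (Ordinal he)) hfe); rewrite !ffunE.
  apply: encb_inj; exact: kb.
have fi : S <= i by rewrite /i leq_pmulr.
have hLe : j - i = S * (hi - lo) by rewrite /i /j -mulnBr.
have fL : S <= j - i by rewrite hLe leq_pmulr // subn_gt0.
have fj : j + S * 2 <= m.+1.
  by rewrite hmS /j -mulnDr leq_mul2l; apply/orP; right; lia.
have fS : T * 3 <= S := hST.
pose m' := (j - i).-1.
have hm'L : m'.+1 = j - i by rewrite /m'; lia.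
have hm' : 1 < m' by rewrite /m'; lia.
have hL0 : m'.+1 = j - i := hm'L.
have hi0 : c.+2 <= i by lia.
have hij : i < j by lia.
have hjn : j + c.+2 <= m by lia.
have hKi : K %| i by rewrite /i dvdn_mulr.
have hKL : K %| m'.+1 by rewrite hm'L hLe dvdn_mulr.
have hLc : c.+2 < m'.+1 by lia.
pose G' := GC' hm'.
have hU' : @loc_unique G' rid (idC' K).
  apply: (cyc_unique (K := K)) => //; lia.
have hU1' : @loc_unique G' 1 (idC' K) by apply: loc_unique_mono hU' _.
have hbis := bis_main hL0 hi0 hij hjn hKi hKL hLc win hU1 hU1'.
have [t [St [ext hst]]] := hacc.
have [[Sc [exc stc]] _] := hlp G (idC K) kap hU1.
have outc : forall z, bits (ns_int (Sc z)) = [:: true].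
  move=> z; rewrite -(final_eq hU1 ext (fun u => (hst u).1) exc stc z); exact: (hst z).2.
have [[S' [ex' st']] _] := hlp G' (idC' K) (kC' i kap) hU1'.
have eqS : forall y, S' y = Sc (inord (i + y)).
  move=> y; exact: (locality hU1' hU1 ex' exc (hbis y)).
have hacc' : @accepts M G' (idC' K) (kC' i kap).
  exists c, S'; split => // y; split => //; by rewrite eqS.
have hcb' : @cert_bounded G' r p (idC' K) (kC' i kap).
  move=> y; have hy := ltn_ord y.
  have hz : nat_of_ord (inord (i + y) : 'I_m.+1) = i + y by rewrite inordK //; lia.
  apply: leq_trans (hcb (inord (i + y))) _.
  apply: peval_mono.
  apply: leq_trans (_ : r.*2.+1 * K.+1 <= _).
    have hl : forall v, @dist_le G r (inord (i + y)) v -> labC v = [::].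
      move=> v /(dist_cyc hrm) [d [hd hc]]; rewrite /labC ifN //.
      have hv := ltn_ord v; rewrite /cong hz in hc; apply/eqP; lia.
    exact: (@wsum_le m K r hm (@labC m) (inord (i + y)) hrm (ltn0Sn _) hl).
  have h2r : r.*2 < m'.+1 by lia.
  exact: (@wsum_ge m' K r hm' (fun _ => [::]) y h2r (fun _ => erefl) (ltn0Sn _)).
have hbd' : GRAPH_bdeg 3 G' by apply: cyc_bdeg.
have hXG' : X G' by apply/(hX G' (idC' K) hU'); exists (kC' i kap).
have [u hu] := (hB G' hbd').1 hXG'.
by move: hu; rewrite /=.
Qed.



Definition allE (G : graph) : Prop := forall u : gV G, glab u = [::].

Lemma allE_prop : is_property allE.
Proof.
move=> G H [f [[g fg gf] [_ hl]]] hG v.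
by rewrite -(gf v) hl hG.
Qed.

Lemma allE_LP : LP allE.
Proof.
split; first exact: allE_prop.
exists M0, 1; split; first exact: M0_lp.
split => // G id hu; exact: M0_acc.
Qed.

Lemma allE_NLP : NLP allE.
Proof.
split; first exact: allE_prop.
exists M0, 1, 1, [::]; split; first exact: M0_lp.
split => //; split => // G id hu; split.
  move=> h; exists (fun _ => [::]); split => //; exact/M0_acc.
by move=> [k [_ /(M0_acc k hu)]].
Qed.

Lemma LP_core P : LP P -> exists M rid, local_poly M /\ 1 <= rid /\
  forall (G : graph) (id : gV G -> seq bool), loc_unique rid id ->
     (P G <-> exists kappa, cert_bounded 1 [::] id kappa /\ accepts M id kappa).
Proof.
move=> [_ [M [rid [hl [hr h]]]]]; exists M, rid; split => //; split => // G id hu.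
rewrite -(h G id hu); split.
  move=> a; exists (fun _ => [::]); split => //.
move=> [k [hk a]].
have -> : (fun _ : gV G => [::] : seq bool) = k => //.
apply: functional_extensionality => u; move: (hk u); rewrite leqn0 size_eq0.
by move/eqP.
Qed.

Lemma notallE (G : graph) : ~ allE G <-> exists u : gV G, glab u != [::].
Proof.
split.
  move=> h; apply: NNPP => hn; apply: h => u; apply/eqP; apply: negbNE; apply/negP => hu.
  apply: hn; by exists u.
by move=> [u hu] h; rewrite h in hu.
Qed.

Lemma part1 Delta : 3 <= Delta ->
  ~ class_incl (restrict coLP (GRAPH_bdeg Delta)) (restrict NLP (GRAPH_bdeg Delta)).
Proof.
move=> hD H.
have hQ : restrict coLP (GRAPH_bdeg Delta) (fun G => ~ allE G /\ GRAPH_bdeg Delta G).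
  exists (fun G => ~ allE G); split => //.
  exists allE; split => //; exact: allE_LP.
have [P2 [[_ [M [rid [r [p [hl [hrid [_ h]]]]]]]] e]] := H _ hQ.
apply: (fooling hl hrid h) => G hG.
have hB : GRAPH_bdeg Delta G by move=> u; exact: leq_trans (hG u) hD.
rewrite -notallE; split.
  by move=> h2; have /e [] : P2 G /\ GRAPH_bdeg Delta G by [].
by move=> h2; have /e [] : ~ allE G /\ GRAPH_bdeg Delta G by [].
Qed.

Lemma part2 Delta : 3 <= Delta ->
  ~ class_incl (restrict NLP (GRAPH_bdeg Delta)) (restrict coLP (GRAPH_bdeg Delta)).
Proof.
move=> hD H.
have hQ : restrict NLP (GRAPH_bdeg Delta) (fun G => allE G /\ GRAPH_bdeg Delta G).
  exists allE; split => //; exact: allE_NLP.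
have [P3 [[P4 [h4 e4]] e]] := H _ hQ.
have [M [rid [hl [hrid h]]]] := LP_core h4.
apply: (fooling hl hrid h) => G hG.
have hB : GRAPH_bdeg Delta G by move=> u; exact: leq_trans (hG u) hD.
rewrite -notallE; split.
  move=> h4G hA; have /e [] : allE G /\ GRAPH_bdeg Delta G by [].
  by move/e4.
move=> hn; apply: NNPP => hn4; apply: hn.
have /e [] // : P3 G /\ GRAPH_bdeg Delta G by split => //; exact/e4.
Qed.

Theorem proposition9p3 :
  (forall Delta : nat, 3 <= Delta ->
     ~ class_incl (restrict coLP (GRAPH_bdeg Delta)) (restrict NLP (GRAPH_bdeg Delta)) /\
     ~ class_incl (restrict NLP (GRAPH_bdeg Delta)) (restrict coLP (GRAPH_bdeg Delta))) /\
  (~ class_incl coLP NLP /\ ~ class_incl NLP coLP).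
Proof.
split; first by move=> D hD; split; [exact: part1 | exact: part2].
split.
  move=> H; apply: (part1 (leqnn 3)) => Q [P [hP e]]; exists P; split => //; exact: H.
move=> H; apply: (part2 (leqnn 3)) => Q [P [hP e]]; exists P; split => //; exact: H.
Qed.
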